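(* Let $\mathbb{K}\in\{\mathbb{R},\mathbb{C}\}$, $\mathbf{R}_U\in\mathbb{K}^{n\times n}$ self-adjoint positive definite, $U:=\mathbb{K}^n$ with $\langle\mathbf{x},\mathbf{y}\rangle_U:=\langle\mathbf{R}_U\mathbf{x},\mathbf{y}\rangle$ and norm $\|\cdot\|_U$. Let $\mathbf{u}^1,\dots,\mathbf{u}^m\in U$, $\mathbf{U}_m:=[\mathbf{u}^1,\dots,\mathbf{u}^m]$, $U_m:=\mathrm{range}(\mathbf{U}_m)$, let $\mathbf{\Theta}\in\mathbb{K}^{k\times n}$ and $\varepsilon\in[0,1)$. Say $\mathbf{\Theta}$ is an $\varepsilon$-embedding for a subspace $V$ if $|\langle\mathbf{x},\mathbf{y}\rangle_U-\langle\mathbf{\Theta}\mathbf{x},\mathbf{\Theta}\mathbf{y}\rangle|\le\varepsilon\|\mathbf{x}\|_U\|\mathbf{y}\|_U$ for all $\mathbf{x},\mathbf{y}\in V$. Let $r$ be a positive integer, let $U_r^*$ be a minimizer of $\sum_{i=1}^m\|\mathbf{u}^i-\mathbf{P}_{W}\mathbf{u}^i\|_U^2$ over subspaces $W\subseteq U_m$ with $\dim(W)=r$, and let $U_r$ be the subspace produced by the sketched method of snapshots with parameter $r$ (defined below). Let $\Delta^{\mathrm{POD}}$ be as defined below. (i) Let $Y\subseteq U_m$ be a subspace with $\dim(Y)\ge r$ and $\Delta_Y:=\frac1m\sum_{i=1}^m\|\mathbf{u}^i-\mathbf{P}_Y\mathbf{u}^i\|_U^2$. If $\mathbf{\Theta}$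 is an $\varepsilon$-embedding for $Y$, for each of the subspaces $\mathrm{span}(\mathbf{u}^i-\mathbf{P}_Y\mathbf{u}^i)$, $i=1,\dots,m$, and for each of the subspaces $\mathrm{span}(\mathbf{u}^i-\mathbf{P}_{U_r^*}\mathbf{u}^i)$, $i=1,\dots,m$, then $$\frac1m\sum_{i=1}^m\|\mathbf{u}^i-\mathbf{P}_{U_r}\mathbf{u}^i\|_U^2\le\frac{2}{1-\varepsilon}\Delta^{\mathrm{POD}}(U_r)+\Big(\frac{2(1+\varepsilon)}{1-\varepsilon}+1\Big)\Delta_Y\le\frac{2(1+\varepsilon)}{1-\varepsilon}\,\frac1m\sum_{i=1}^m\|\mathbf{u}^i-\mathbf{P}_{U_r^*}\mathbf{u}^i\|_U^2+\Big(\frac{2(1+\varepsilon)}{1-\varepsilon}+1\Big)\Delta_Y.$$ (ii) If $\mathbf{\Theta}$ is an $\varepsilon$-embedding for $U_m$ (and $r\le\dim U_m$), then $$\frac1m\sum_{i=1}^m\|\mathbf{u}^i-\mathbf{P}_{U_r}\mathbf{u}^i\|_U^2\le\frac{1}{1-\varepsilon}\Delta^{\mathrm{POD}}(U_r)\le\frac{1+\varepsilon}{1-\varepsilon}\,\frac1m\sum_{i=1}^m\|\mathbf{u}^i-\mathbf{P}_{U_r^*}\mathbf{u}^i\|_U^2.$$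
   Context: $\langle\mathbf{x},\mathbf{y}\rangle=\mathbf{x}^{\mathrm{H}}\mathbf{y}$, $\|\cdot\|$ Euclidean norm; $\mathbf{P}_V$ is the $\langle\cdot,\cdot\rangle_U$-orthogonal projection onto a subspace $V$. Sketched method of snapshots: let $\mathbf{G}:=(\mathbf{\Theta}\mathbf{U}_m)^{\mathrm{H}}\mathbf{\Theta}\mathbf{U}_m$, $l:=\mathrm{rank}(\mathbf{\Theta}\mathbf{U}_m)$ (with $r\le l$, so that $U_r$ is defined), and let $(\lambda_i,\mathbf{t}_i)_{i=1}^l$ be eigenpairs of $\mathbf{G}$ for its nonzero eigenvalues, with orthonormal eigenvectors and $\lambda_1\ge\dots\ge\lambda_l$; then $U_r:=\mathrm{range}(\mathbf{U}_m[\mathbf{t}_1,\dots,\mathbf{t}_r])$. For $V\subseteq U_m$ and $\mathbf{x}\in U_m$ let $\mathbf{P}_V^{\mathbf{\Theta}}\mathbf{x}\in\arg\min_{\mathbf{w}\in V}\|\mathbf{\Theta}(\mathbf{x}-\mathbf{w})\|$, and $\Delta^{\mathrm{POD}}(V):=\frac1m\sum_{i=1}^m\|\mathbf{\Theta}(\mathbf{u}^i-\mathbf{P}_V^{\mathbf{\Theta}}\mathbf{u}^i)\|^2$. *)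

(* Defs.v *)
From HB Require Import structures.
From mathcomp Require Import all_boot all_order all_algebra.
From Stdlib Require Import ClassicalEpsilon.
Set Implicit Arguments. Unset Strict Implicit. Unset Printing Implicit Defensive.
Import Order.TTheory GRing.Theory Num.Theory.
Local Open Scope ring_scope.

(* The scalar field K is generic here, together with its conjugation [cj]
   and square root [sq]; the theorem instantiates (K,cj,sq) with
   (R, id, Num.sqrt) for any real closed field R, and (C, conj, sqrtC) for
   any numeric algebraically closed field C (e.g. complex numbers). *)
Section Defs.
Variables (K : numFieldType) (cj : K -> K) (sq : K -> K).

Definition adjmx (p q : nat) (A : 'M[K]_(p, q)) : 'M[K]_(q, p) := map_mx cj A^T.

Definition ip (p : nat) (x y : 'cV[K]_p) : K := (adjmx x *m y) 0 0.

Definition ipU (n : nat) (RU : 'M[K]_n) (x y : 'cV[K]_n) : K := ip (RU *m x) y.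
Definition normU (n : nat) (RU : 'M[K]_n) (x : 'cV[K]_n) : K := sq (ipU RU x x).
Definition norm2 (p : nat) (x : 'cV[K]_p) : K := sq (ip x x).

Definition self_adjoint (n : nat) (A : 'M[K]_n) : Prop := adjmx A = A.
Definition pos_def (n : nat) (A : 'M[K]_n) : Prop :=
  forall x : 'cV[K]_n, x != 0 -> 0 < ip x (A *m x).

(* U-orthogonal projection onto V (chosen by classical choice; it exists and is
   unique when R_U is self-adjoint positive definite) *)
Definition projU (n : nat) (RU : 'M[K]_n) (V : {vspace 'cV[K]_n}) (x : 'cV[K]_n)
  : 'cV[K]_n :=
  epsilon (inhabits 0)
    (fun p => p \in V /\ forall w, w \in V -> ipU RU w (x - p) = 0).

Definition projTh (n k : nat) (Th : 'M[K]_(k, n)) (V : {vspace 'cV[K]_n})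
  (x : 'cV[K]_n) : 'cV[K]_n :=
  epsilon (inhabits 0)
    (fun p => p \in V /\ forall w, w \in V ->
       norm2 (Th *m (x - p)) <= norm2 (Th *m (x - w))).

Definition eps_embedding (n k : nat) (RU : 'M[K]_n) (Th : 'M[K]_(k, n)) (eps : K)
  (V : {vspace 'cV[K]_n}) : Prop :=
  forall x y, x \in V -> y \in V ->
    `|ipU RU x y - ip (Th *m x) (Th *m y)| <= eps * normU RU x * normU RU y.

Definition snapmx (n m : nat) (u : 'I_m -> 'cV[K]_n) : 'M[K]_(n, m) :=
  \matrix_(j < n, i < m) u i j 0.
Definition snapspace (n m : nat) (u : 'I_m -> 'cV[K]_n) : {vspace 'cV[K]_n} :=
  (\sum_(i < m) <[u i]>)%VS.

Definition proj_err (n m : nat) (RU : 'M[K]_n) (u : 'I_m -> 'cV[K]_n)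
  (W : {vspace 'cV[K]_n}) : K :=
  \sum_(i < m) normU RU (u i - projU RU W (u i)) ^+ 2.

Definition DeltaPOD (n m k : nat) (Th : 'M[K]_(k, n)) (u : 'I_m -> 'cV[K]_n)
  (V : {vspace 'cV[K]_n}) : K :=
  m%:R^-1 * \sum_(i < m) norm2 (Th *m (u i - projTh Th V (u i))) ^+ 2.

Definition sketched_eigenpairs (n m k : nat) (Th : 'M[K]_(k, n))
  (u : 'I_m -> 'cV[K]_n) (l : nat) (lam : nat -> K) (t : nat -> 'cV[K]_m) : Prop :=
  let G := adjmx (Th *m snapmx u) *m (Th *m snapmx u) in
  [/\ l = \rank (Th *m snapmx u),
      forall i, (i < l)%N -> G *m t i = lam i *: t i /\ lam i != 0,
      forall i j, (i < l)%N -> (j < l)%N -> ip (t i) (t j) = (i == j)%:R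
    & forall i j, (i <= j)%N -> (j < l)%N -> lam j <= lam i].

Definition sketched_space (n m : nat) (u : 'I_m -> 'cV[K]_n) (t : nat -> 'cV[K]_m)
  (r : nat) : {vspace 'cV[K]_n} :=
  (\sum_(i < r) <[snapmx u *m t i]>)%VS.

Definition thm54_statement : Prop :=
  forall (n m k : nat) (RU : 'M[K]_n) (u : 'I_m -> 'cV[K]_n) (Th : 'M[K]_(k, n))
    (eps : K) (r : nat) (Ustar : {vspace 'cV[K]_n})
    (l : nat) (lam : nat -> K) (t : nat -> 'cV[K]_m),
  self_adjoint RU -> pos_def RU ->
  0 <= eps -> eps < 1 -> (0 < r)%N ->
  (Ustar <= snapspace u)%VS -> \dim Ustar = r ->
  (forall W : {vspace 'cV[K]_n}, (W <= snapspace u)%VS -> \dim W = r ->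
      proj_err RU u Ustar <= proj_err RU u W) ->
  sketched_eigenpairs Th u l lam t -> (r <= l)%N ->
  let Ur := sketched_space u t r in
  let errUr := m%:R^-1 * proj_err RU u Ur in
  let errStar := m%:R^-1 * proj_err RU u Ustar in
  (forall Y : {vspace 'cV[K]_n},
      (Y <= snapspace u)%VS -> (r <= \dim Y)%N ->
      eps_embedding RU Th eps Y ->
      (forall i, eps_embedding RU Th eps <[u i - projU RU Y (u i)]>%VS) ->
      (forall i, eps_embedding RU Th eps <[u i - projU RU Ustar (u i)]>%VS) ->
      let DY := m%:R^-1 * proj_err RU u Y in
      errUr <= 2 / (1 - eps) * DeltaPOD Th u Ur
               + (2 * (1 + eps) / (1 - eps) + 1) * DY
      /\ 2 / (1 - eps) * DeltaPOD Th u Ur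
               + (2 * (1 + eps) / (1 - eps) + 1) * DY
         <= 2 * (1 + eps) / (1 - eps) * errStar
               + (2 * (1 + eps) / (1 - eps) + 1) * DY)
  /\
  (eps_embedding RU Th eps (snapspace u) -> (r <= \dim (snapspace u))%N ->
      errUr <= (1 - eps)^-1 * DeltaPOD Th u Ur
      /\ (1 - eps)^-1 * DeltaPOD Th u Ur <= (1 + eps) / (1 - eps) * errStar).

End Defs.

(* Main.v *)
Require Import Defs.
From HB Require Import structures.
From mathcomp Require Import all_boot all_order all_algebra.
From Stdlib Require Import ClassicalEpsilon.
From mathcomp Require Import ring.
Set Implicit Arguments. Unset Strict Implicit. Unset Printing Implicit Defensive.
Import Order.TTheory GRing.Theory Num.Theory.
Local Open Scope ring_scope.

Section Gen.
Variables (K : numFieldType) (cj : {rmorphism K -> K}) (sq : K -> K).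
Hypothesis cjK : involutive cj.
Hypothesis cj_real : forall x, 0 <= x -> cj x = x.
Hypothesis mulcj_ge0 : forall x, 0 <= cj x * x.
Hypothesis mulcj_eq0 : forall x, cj x * x = 0 -> x = 0.
Hypothesis sq_ge0 : forall x, 0 <= x -> 0 <= sq x.
Hypothesis sqE : forall x, 0 <= x -> sq x ^+ 2 = x.

Local Notation adj := (adjmx cj).

Lemma adj_mul p q s (A : 'M[K]_(p, q)) (B : 'M[K]_(q, s)) : adj (A *m B) = adj B *m adj A.
Proof. by rewrite /adjmx trmx_mul map_mxM. Qed.

Lemma adjK p q (A : 'M[K]_(p, q)) : adj (adj A) = A.
Proof. by apply/matrixP => i j; rewrite !mxE cjK. Qed.

Lemma adjD p q (A B : 'M[K]_(p, q)) : adj (A + B) = adj A + adj B.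
Proof. by apply/matrixP => i j; rewrite !mxE rmorphD. Qed.

Lemma adjN p q (A : 'M[K]_(p, q)) : adj (- A) = - adj A.
Proof. by apply/matrixP => i j; rewrite !mxE rmorphN. Qed.

Lemma adjB p q (A B : 'M[K]_(p, q)) : adj (A - B) = adj A - adj B.
Proof. by rewrite adjD adjN. Qed.

Lemma adjZ p q a (A : 'M[K]_(p, q)) : adj (a *: A) = cj a *: adj A.
Proof. by apply/matrixP => i j; rewrite !mxE rmorphM. Qed.

Lemma adj1 p : adj (1%:M : 'M[K]_p) = 1%:M.
Proof. by apply/matrixP => i j; rewrite !mxE rmorphMn rmorph1 eq_sym. Qed.

Lemma adj0 p q : adj (0 : 'M[K]_(p, q)) = 0.
Proof. by apply/matrixP => i j; rewrite !mxE rmorph0. Qed.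

Lemma ipE p (x y : 'cV[K]_p) : ip cj x y = \sum_i cj (x i 0) * y i 0.
Proof. by rewrite /ip mxE; apply: eq_bigr => i _; rewrite !mxE. Qed.

Lemma ip_ge0 p (x : 'cV[K]_p) : 0 <= ip cj x x.
Proof. by rewrite ipE; apply: sumr_ge0 => i _. Qed.

Lemma ip_eq0 p (x : 'cV[K]_p) : ip cj x x = 0 -> x = 0.
Proof.
rewrite ipE => /psumr_eq0P H; apply/matrixP => i j.
by rewrite (ord1 j) mxE; apply: mulcj_eq0; apply: H.
Qed.

Lemma trE p q (X Y : 'M[K]_(p, q)) : \tr (adj X *m Y) = \sum_i ip cj (col i X) (col i Y).
Proof.
rewrite /mxtrace; apply: eq_bigr => i _; rewrite ipE mxE.
by apply: eq_bigr => j _; rewrite !mxE.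
Qed.

Lemma tr_ge0 p q (X : 'M[K]_(p, q)) : 0 <= \tr (adj X *m X).
Proof. by rewrite trE; apply: sumr_ge0 => i _; apply: ip_ge0. Qed.

Lemma tr_eq0 p q (X : 'M[K]_(p, q)) : \tr (adj X *m X) = 0 -> X = 0.
Proof.
rewrite trE => /psumr_eq0P H; apply/matrixP => a i.
have := ip_eq0 (H (fun j _ => ip_ge0 _) i isT) => /matrixP /(_ a 0).
by rewrite !mxE.
Qed.

Lemma cj_mx00 p (M : 'M[K]_p.+1) : cj (M 0 0) = (adj M) 0 0.
Proof. by rewrite /adjmx !mxE. Qed.

Lemma cj_tr p (M : 'M[K]_p) : cj (\tr M) = \tr (adj M).
Proof. by rewrite /mxtrace rmorph_sum; apply: eq_bigr => i _; rewrite /adjmx !mxE. Qed.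

Lemma colM p q s (A : 'M[K]_(p, q)) (B : 'M[K]_(q, s)) i : col i (A *m B) = A *m col i B.
Proof. by apply/matrixP => a b; rewrite !mxE; apply: eq_bigr => j _; rewrite !mxE. Qed.

Definition fb p q (R : 'M[K]_p) (X Y : 'M[K]_(p, q)) := \tr (adj X *m (R *m Y)).

Section FB.
Variables (p : nat) (R : 'M[K]_p).
Hypothesis HR : adj R = R.

Lemma fb_conj q (X Y : 'M[K]_(p, q)) : cj (fb R X Y) = fb R Y X.
Proof.
by rewrite /fb cj_tr !adj_mul adjK HR mulmxA.
Qed.

Lemma fbDl q (X Y Z : 'M[K]_(p, q)) : fb R (X + Y) Z = fb R X Z + fb R Y Z.
Proof. by rewrite /fb adjD mulmxDl mxtraceD. Qed.
Lemma fbDr q (X Y Z : 'M[K]_(p, q)) : fb R Z (X + Y) = fb R Z X + fb R Z Y.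
Proof. by rewrite /fb mulmxDr mulmxDr mxtraceD. Qed.
Lemma fbNl q (X Z : 'M[K]_(p, q)) : fb R (- X) Z = - fb R X Z.
Proof. by rewrite /fb adjN mulNmx linearN. Qed.
Lemma fbNr q (X Z : 'M[K]_(p, q)) : fb R Z (- X) = - fb R Z X.
Proof. by rewrite /fb mulmxN mulmxN linearN. Qed.
Lemma fbBl q (X Y Z : 'M[K]_(p, q)) : fb R (X - Y) Z = fb R X Z - fb R Y Z.
Proof. by rewrite fbDl fbNl. Qed.
Lemma fbBr q (X Y Z : 'M[K]_(p, q)) : fb R Z (X - Y) = fb R Z X - fb R Z Y.
Proof. by rewrite fbDr fbNr. Qed.

Lemma fb_pyth q (X Y : 'M[K]_(p, q)) : fb R X Y = 0 ->
  fb R (X + Y) (X + Y) = fb R X X + fb R Y Y.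
Proof.
move=> H; have H' : fb R Y X = 0 by rewrite -fb_conj H rmorph0.
by rewrite fbDl !fbDr H H' add0r addr0.
Qed.

Lemma fb_col q (X Y : 'M[K]_(p, q)) :
  fb R X Y = \sum_i ip cj (col i X) (R *m col i Y).
Proof. by rewrite /fb trE; apply: eq_bigr => i _; rewrite colM. Qed.

Lemma fb_mulC q (X Y : 'M[K]_(p, q)) (C : 'M[K]_q) :
  fb R (X *m C) (Y *m C) = \tr (adj X *m (R *m Y) *m (C *m adj C)).
Proof.
by rewrite /fb adj_mul -!mulmxA mxtrace_mulC !mulmxA.
Qed.

End FB.

Lemma fb1 p q (X Y : 'M[K]_(p, q)) : fb 1%:M X Y = \tr (adj X *m Y).
Proof. by rewrite /fb mul1mx. Qed.

Lemma unit_inj d (M : 'M[K]_d) : (forall v : 'cV_d, M *m v = 0 -> v = 0) -> M \in unitmx.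
Proof.
move=> H; rewrite -unitmx_tr -row_free_unit -kermx_eq0; apply/eqP/row_matrixP => i.
rewrite row0; apply: trmx_inj; rewrite trmx0; apply: H.
have := mulmx_ker M^T => /(congr1 (row i)); rewrite row_mul row0 => /(congr1 trmx).
by rewrite trmx_mul trmxK trmx0.
Qed.

Lemma proj_ex p d (R : 'M[K]_p) (HR : adj R = R)
  (PD : forall x : 'cV_p, x != 0 -> 0 < ip cj x (R *m x))
  (B : 'M[K]_(p, d)) (Bf : forall c : 'cV_d, B *m c = 0 -> c = 0) :
  exists X : 'M[K]_(d, p), [/\ B *m X *m B = B,
     adj B *m R *m (1%:M - B *m X) = 0 &
     (R = 1%:M -> \tr (B *m X) = d%:R)].
Proof.
pose M := adj B *m R *m B.
have Mu : M \in unitmx.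
  apply: unit_inj => v Mv; apply: Bf; apply/eqP; apply/negPn/negP => nz.
  have := PD _ nz; rewrite /ip adj_mul.
  have -> : adj v *m adj B *m (R *m (B *m v)) = adj v *m (M *m v) by rewrite /M !mulmxA.
  by rewrite Mv mulmx0 mxE ltxx.
exists (invmx M *m adj B *m R); split.
- by rewrite -!mulmxA [adj B *m (R *m B)]mulmxA -/M mulVmx // mulmx1.
- rewrite mulmxBr mulmx1 !mulmxA -/M mulmxV // mul1mx; exact: subrr.
- move=> R1; rewrite mxtrace_mulC -!mulmxA R1 mul1mx.
  have -> : invmx M *m (adj B *m B) = invmx M *m M by rewrite /M R1 mulmx1.
  by rewrite mulVmx // mxtrace1.
Qed.


Lemma tr11 (M : 'M[K]_1) : \tr M = M 0 0.
Proof. by rewrite /mxtrace big_ord1. Qed.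

Section PD.
Variables (p : nat) (R : 'M[K]_p).
Hypothesis HR : adj R = R.
Hypothesis PD : forall x : 'cV_p, x != 0 -> 0 < ip cj x (R *m x).

Lemma ipR_ge0 (x : 'cV_p) : 0 <= ip cj x (R *m x).
Proof.
have [->|nz] := eqVneq x 0; last exact: ltW (PD nz).
by rewrite mulmx0 /ip mulmx0 mxE.
Qed.

Lemma fb_ge0 q (X : 'M[K]_(p, q)) : 0 <= fb R X X.
Proof. by rewrite fb_col //; apply: sumr_ge0 => i _; apply: ipR_ge0. Qed.

Lemma ipU_fb (x y : 'cV_p) : ipU cj R x y = fb R x y.
Proof. by rewrite /ipU /fb tr11 /ip adj_mul HR mulmxA. Qed.

Lemma ipU_ge0 (x : 'cV_p) : 0 <= ipU cj R x x.
Proof. by rewrite ipU_fb; apply: fb_ge0. Qed.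

Lemma normU2 (x : 'cV_p) : normU cj sq R x ^+ 2 = ipU cj R x x.
Proof. by rewrite /normU sqE //; apply: ipU_ge0. Qed.

Lemma normUM (x : 'cV_p) : normU cj sq R x * normU cj sq R x = ipU cj R x x.
Proof. by rewrite -expr2 normU2. Qed.

End PD.

Lemma ip_fb p (x y : 'cV[K]_p) : ip cj x y = fb 1%:M x y.
Proof. by rewrite fb1 tr11. Qed.

Lemma norm22 p (x : 'cV[K]_p) : norm2 cj sq x ^+ 2 = ip cj x x.
Proof. by rewrite /norm2 sqE //; apply: ip_ge0. Qed.

Lemma PD1 p (x : 'cV[K]_p) : x != 0 -> 0 < ip cj x (1%:M *m x).
Proof.
move=> nz; rewrite mul1mx lt_def ip_ge0 andbT; apply/eqP => /ip_eq0 H.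
by rewrite H eqxx in nz.
Qed.

Definition bmx p (V : {vspace 'cV[K]_p}) : 'M[K]_(p, \dim V) :=
  \matrix_(j, i) ((vbasis V)`_i) j 0.

Lemma bmx_mul p (V : {vspace 'cV[K]_p}) (c : 'cV_(\dim V)) :
  bmx V *m c = \sum_i c i 0 *: (vbasis V)`_i.
Proof.
apply/matrixP => a b; rewrite (ord1 b) !mxE summxE; apply: eq_bigr => i _.
by rewrite !mxE mulrC.
Qed.

Lemma bmx_free p (V : {vspace 'cV[K]_p}) (c : 'cV_(\dim V)) : bmx V *m c = 0 -> c = 0.
Proof.
rewrite bmx_mul => H; have := basis_free (vbasisP V) => /freeP /(_ (fun i => c i 0) H) H'.
by apply/matrixP => i j; rewrite (ord1 j) mxE H'.
Qed.

Lemma bmx_mem p (V : {vspace 'cV[K]_p}) (c : 'cV_(\dim V)) : bmx V *m c \in V.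
Proof.
rewrite bmx_mul; apply: memv_suml => i _; apply: memvZ; apply: vbasis_mem.
by apply: mem_nth; rewrite size_tuple.
Qed.

Lemma bmx_cols p q (V : {vspace 'cV[K]_p}) (W : 'M[K]_(p, q)) :
  (forall j, col j W \in V) -> exists Z, W = bmx V *m Z.
Proof.
move=> H; exists (\matrix_(i, j) coord (vbasis V) i (col j W)).
apply/matrixP => a j; have := coord_vbasis (H j) => /matrixP /(_ a 0).
rewrite !mxE => ->; rewrite summxE; apply: eq_bigr => i _; rewrite !mxE mulrC.
done.
Qed.

Lemma bmx_span p (V : {vspace 'cV[K]_p}) (x : 'cV_p) : x \in V -> exists c, x = bmx V *m c.
Proof.
move=> xV; have [|Z ->] := @bmx_cols p 1 V x; first by move=> j; rewrite (ord1 j) col_id.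
by exists Z.
Qed.

Section ProjU.
Variables (p : nat) (R : 'M[K]_p).
Hypothesis HR : adj R = R.
Hypothesis PD : forall x : 'cV_p, x != 0 -> 0 < ip cj x (R *m x).

Lemma projU_spec (V : {vspace 'cV[K]_p}) x :
  projU cj R V x \in V /\ forall w, w \in V -> ipU cj R w (x - projU cj R V x) = 0.
Proof.
rewrite /projU; apply: (epsilon_spec (inhabits (0:'cV_p))
  (fun p0 => p0 \in V /\ forall w, w \in V -> ipU cj R w (x - p0) = 0)).
have [X [_ HX _]] := proj_ex HR PD (@bmx_free p V).
exists (bmx V *m (X *m x)); split; first exact: bmx_mem.
move=> w /bmx_span [c ->]; rewrite /ipU /ip !adj_mul HR.
have -> : adj c *m adj (bmx V) *m R *m (x - bmx V *m (X *m x)) =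
   adj c *m (adj (bmx V) *m R *m (1%:M - bmx V *m X)) *m x.
  by rewrite !mulmxBr !mulmxBl mulmx1 !mulmxA.
by rewrite HX mulmx0 mul0mx mxE.
Qed.

Lemma projU_mem (V : {vspace 'cV[K]_p}) (x : 'cV_p) : projU cj R V x \in V.
Proof. by case: (projU_spec V x). Qed.

Lemma projU_orth (V : {vspace 'cV[K]_p}) (x w : 'cV_p) : w \in V -> fb R w (x - projU cj R V x) = 0.
Proof. by move=> wV; rewrite -ipU_fb //; case: (projU_spec V x) => _ ->. Qed.

Lemma projU_best (V : {vspace 'cV[K]_p}) (x w : 'cV_p) : w \in V ->
  ipU cj R (x - projU cj R V x) (x - projU cj R V x) <= ipU cj R (x - w) (x - w).
Proof.
move=> wV; set pr := projU cj R V x.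
have pwV : pr - w \in V by rewrite memvB // projU_mem.
have -> : x - w = (pr - w) + (x - pr) by rewrite [RHS]addrC addrA subrK.
rewrite !ipU_fb // (fb_pyth HR (projU_orth x pwV)).
by rewrite lerDr; apply: fb_ge0.
Qed.

End ProjU.


Lemma mul_colsum p q (X : 'M[K]_(p, q)) (c : 'cV_q) : X *m c = \sum_i c i 0 *: col i X.
Proof.
apply/matrixP => a b; rewrite (ord1 b) !mxE summxE; apply: eq_bigr => i _.
by rewrite !mxE mulrC.
Qed.

Lemma cols_mul p q s (V : {vspace 'cV[K]_p}) (X : 'M[K]_(p, q)) (C : 'M[K]_(q, s)) :
  (forall j, col j X \in V) -> forall j, col j (X *m C) \in V.
Proof.
move=> H j; rewrite colM mul_colsum; apply: memv_suml => i _; exact: memvZ.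
Qed.

Lemma adj_herm_sub p (P : 'M[K]_p) : adj P = P -> adj (1%:M - P) = 1%:M - P.
Proof. by move=> HP; rewrite adjB adj1 HP. Qed.

Lemma idem_sub p (P : 'M[K]_p) : P *m P = P -> (1%:M - P) *m (1%:M - P) = 1%:M - P.
Proof. by move=> HP; rewrite mulmxBl mul1mx mulmxBr mulmx1 HP subrr subr0. Qed.

Lemma fb_contract p q (R : 'M[K]_p) (HR : adj R = R)
  (PD : forall x : 'cV_p, x != 0 -> 0 < ip cj x (R *m x))
  (X : 'M[K]_(p, q)) (C : 'M[K]_q) : adj C = C -> C *m C = C ->
  fb R (X *m C) (X *m C) <= fb R X X.
Proof.
move=> HC IC.
have E : X = X *m C + X *m (1%:M - C) by rewrite mulmxBr mulmx1 addrC subrK.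
have O : fb R (X *m C) (X *m (1%:M - C)) = 0.
  rewrite /fb adj_mul HC -!mulmxA mxtrace_mulC -!mulmxA.
  by rewrite mulmxBl mul1mx IC subrr !mulmx0 linear0.
rewrite {3 4}E fb_pyth // lerDl; exact: fb_ge0.
Qed.

Lemma colP p q (A B : 'M[K]_(p, q)) : (forall j, col j A = col j B) -> A = B.
Proof.
move=> H; apply/matrixP => a j; have := congr1 (fun M : 'cV[K]_p => M a 0) (H j).
by rewrite !mxE.
Qed.

Lemma col_diag p q (M : 'M[K]_(p, q)) (d : 'rV[K]_q) j : col j (M *m diag_mx d) = d 0 j *: col j M.
Proof. by apply/matrixP => a b; rewrite mul_mx_diag !mxE mulrC. Qed.

Lemma rowfree_tr p q (V : 'M[K]_(p, q)) : (forall c : 'cV_q, V *m c = 0 -> c = 0) -> row_free V^T.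
Proof.
move=> H; rewrite -kermx_eq0; apply/eqP/row_matrixP => i.
rewrite row0; apply: trmx_inj; rewrite trmx0; apply: H.
have := mulmx_ker V^T => /(congr1 (row i)); rewrite row_mul row0 => /(congr1 trmx).
by rewrite trmx_mul trmxK trmx0.
Qed.

Lemma rank_free p q (V : 'M[K]_(p, q)) : (forall c : 'cV_q, V *m c = 0 -> c = 0) -> \rank V = q.
Proof. by move=> /rowfree_tr /eqP; rewrite mxrank_tr. Qed.

Lemma herm_of_proj p q (B : 'M[K]_(p, q)) (X : 'M[K]_(q, p)) :
  adj B *m (1%:M - B *m X) = 0 -> adj (B *m X) = B *m X.
Proof.
move=> H; set Q := B *m X.
have H1 : adj Q *m (1%:M - Q) = 0 by rewrite /Q adj_mul -mulmxA H mulmx0.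
have H2 : adj Q = adj Q *m Q.
  by apply/eqP; rewrite -subr_eq0 -{1}[adj Q]mulmx1 -mulmxBr H1.
have E : Q = adj Q *m Q by rewrite -{1}(adjK Q) {1}H2 adj_mul adjK.
by rewrite H2 -E.
Qed.

Lemma fb_left p q (Q : 'M[K]_p) (X : 'M[K]_(p, q)) : adj Q = Q -> Q *m Q = Q ->
  fb 1%:M (Q *m X) (Q *m X) = \tr (adj X *m (Q *m X)).
Proof. by move=> HQ IQ; rewrite fb1 adj_mul HQ -mulmxA (mulmxA Q Q) IQ. Qed.


Lemma fb_left_le p q (Q : 'M[K]_p) (X : 'M[K]_(p, q)) : adj Q = Q -> Q *m Q = Q ->
  fb 1%:M (Q *m X) (Q *m X) <= fb 1%:M X X.
Proof.
move=> HQ IQ.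
have E : X = Q *m X + (1%:M - Q) *m X by rewrite mulmxBl mul1mx addrC subrK.
have O : fb 1%:M (Q *m X) ((1%:M - Q) *m X) = 0.
  rewrite fb1 adj_mul HQ -mulmxA (mulmxA Q) mulmxBr mulmx1 IQ subrr mul0mx mulmx0.
  exact: linear0.
rewrite {3 4}E (fb_pyth (adj1 p) O) lerDl.
exact: (fb_ge0 (@PD1 p)).
Qed.

Lemma sum_widen (l r : nat) (F : nat -> K) : (r <= l)%N ->
  \sum_(i < r) F i = \sum_(i < l) (i < r)%N%:R * F i.
Proof.
move=> rl; rewrite (big_ord_widen _ _ rl) big_mkcond /=; apply: eq_bigr => i _.
by case: ifP => _; rewrite ?mul1r ?mul0r.
Qed.

Lemma sum_rearr (l r : nat) (lam a : nat -> K) : (0 < r)%N -> (r <= l)%N ->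
  (forall i, (i < l)%N -> 0 < lam i) ->
  (forall i j, (i <= j)%N -> (j < l)%N -> lam j <= lam i) ->
  (forall i, (i < l)%N -> 0 <= a i) -> (forall i, (i < l)%N -> a i <= lam i) ->
  \sum_(i < l) a i / lam i <= r%:R -> \sum_(i < l) a i <= \sum_(i < r) lam i.
Proof.
move=> r0 rl lpos lord a0 alam sc.
set mu := lam r.-1.
have mu0 : 0 <= mu by apply: ltW; apply: lpos; rewrite (leq_trans _ rl) // prednK.
have claim : forall i : 'I_l, a i - (i < r)%N%:R * lam i <= mu * (a i / lam i - (i < r)%N%:R).
  move=> i; have li := ltn_ord i; have lnz : lam i != 0 by rewrite gt_eqF // lpos.
  have ac : a i = a i / lam i * lam i by rewrite divfK.
  set c := a i / lam i; rewrite [in a i - _]ac; rewrite -subr_ge0.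
  case: (ltnP i r) => ir /=.
  - have -> : mu * (c - 1%:R) - (c * lam i - 1%:R * lam i) = (lam i - mu) * (1 - c) by ring.
    apply: mulr_ge0; first by rewrite subr_ge0 lord // -ltnS prednK.
    rewrite subr_ge0 /c ler_pdivrMr ?lpos // mul1r; exact: alam.
  - have -> : mu * (c - 0%:R) - (c * lam i - 0%:R * lam i) = c * (mu - lam i) by ring.
    apply: mulr_ge0; first by rewrite /c divr_ge0 ?a0 // ltW ?lpos.
    by rewrite subr_ge0 lord // (leq_trans (leq_pred r) ir).
have : \sum_(i < l) (a i - (i < r)%N%:R * lam i) <= \sum_(i < l) mu * (a i / lam i - (i < r)%N%:R).
  by apply: ler_sum => i _; apply: claim.
rewrite sumrB -mulr_sumr sumrB -(sum_widen _ rl).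
have -> : \sum_(i < l) (i < r)%N%:R = r%:R :> K.
  have E := sum_widen (fun=> (1:K)) rl.
  have E2 : \sum_(i < l) (i < r)%N%:R = \sum_(i < l) (i < r)%N%:R * (1:K).
    by apply: eq_bigr => i _; rewrite mulr1.
  by rewrite E2 -E sumr_const card_ord.
move=> H; rewrite -subr_le0; apply: le_trans H _.
by rewrite mulr_ge0_le0 // subr_le0.
Qed.

Lemma KF_step1 k m (A : 'M[K]_(k, m)) (Q : 'M[K]_k) d (M : 'M[K]_(k, d)) (Z : 'M[K]_(d, m)) :
  adj Q = Q -> Q *m Q = Q -> Q *m M = M ->
  fb 1%:M A A - \tr (adj A *m (Q *m A)) <= fb 1%:M (A - M *m Z) (A - M *m Z).
Proof.
move=> HQ IQ QM.
have E : A - M *m Z = (1%:M - Q) *m A + Q *m (A - M *m Z).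
  by rewrite mulmxBr mulmxA QM mulmxBl mul1mx addrA subrK.
have O : fb 1%:M ((1%:M - Q) *m A) (Q *m (A - M *m Z)) = 0.
  rewrite fb1 adj_mul adj_herm_sub // -mulmxA (mulmxA _ Q) mulmxBl mul1mx IQ subrr.
  by rewrite mul0mx mulmx0 linear0.
rewrite E (fb_pyth (adj1 k) O).
have -> : fb 1%:M ((1%:M - Q) *m A) ((1%:M - Q) *m A) = fb 1%:M A A - \tr (adj A *m (Q *m A)).
  rewrite fb_left ?adj_herm_sub ?idem_sub // fb1 mulmxBl mul1mx mulmxBr linearB //.
by rewrite lerDl; exact: (fb_ge0 (@PD1 k)).
Qed.


Lemma tr_compl k m p (A0 : 'M[K]_(k, m)) (T : 'M[K]_(m, p)) (Q : 'M[K]_k) :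
  A0 = A0 *m (T *m adj T) -> adj T *m T = 1%:M ->
  \tr (adj A0 *m (Q *m A0)) = \tr (adj (A0 *m T) *m (Q *m (A0 *m T))).
Proof.
move=> HA HT; rewrite {1 2}HA !adj_mul adjK.
have -> : T *m adj T *m adj A0 *m (Q *m (A0 *m (T *m adj T)))
   = T *m (adj T *m adj A0 *m (Q *m (A0 *m T)) *m adj T) by rewrite !mulmxA.
rewrite mxtrace_mulC -(mulmxA _ (adj T) T) HT mulmx1.
by rewrite !mulmxA.
Qed.

Lemma tr_QN p (Q N : 'M[K]_p) : adj Q = Q -> Q *m Q = Q -> adj N = N -> N *m N = N ->
  \tr (Q *m N) <= \tr Q.
Proof.
move=> HQ IQ HN IN; rewrite -subr_ge0 -linearB /= -{1}[Q]mulmx1 -mulmxBr.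
have -> : \tr (Q *m (1%:M - N)) = fb 1%:M ((1%:M - N) *m Q) ((1%:M - N) *m Q).
  rewrite fb_left ?adj_herm_sub ?idem_sub // HQ; symmetry.
  by rewrite mxtrace_mulC -(mulmxA _ Q Q) IQ mxtrace_mulC.
exact: (fb_ge0 (@PD1 p)).
Qed.

Section Sketch.
Variables (n m k : nat) (Th : 'M[K]_(k, n)) (u : 'I_m -> 'cV[K]_n).
Variables (l : nat) (lam : nat -> K) (t : nat -> 'cV[K]_m).
Hypothesis Heig : sketched_eigenpairs cj Th u l lam t.

Local Notation Um := (snapmx u).
Local Notation A := (Th *m snapmx u).
Local Notation G := (adj (Th *m snapmx u) *m (Th *m snapmx u)).

Definition Tm p : 'M[K]_(m, p) := \matrix_(j, i) t i j 0.

Lemma Hrank : l = \rank A.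
Proof. by case: Heig. Qed.
Lemma Hev i : (i < l)%N -> G *m t i = lam i *: t i /\ lam i != 0.
Proof. by case: Heig => _ H _ _; apply: H. Qed.
Lemma Hon i j : (i < l)%N -> (j < l)%N -> ip cj (t i) (t j) = (i == j)%:R.
Proof. by case: Heig => _ _ H _; apply: H. Qed.
Lemma Hord i j : (i <= j)%N -> (j < l)%N -> lam j <= lam i.
Proof. by case: Heig => _ _ _ H; apply: H. Qed.

Lemma col_Tm p (i : 'I_p) : col i (Tm p) = t i.
Proof. by apply/matrixP => a b; rewrite (ord1 b) !mxE. Qed.

Lemma lam_gt0 i : (i < l)%N -> 0 < lam i.
Proof.
move=> il; have [E nz] := Hev il.
have : ip cj (t i) (G *m t i) = lam i.
  by rewrite E /ip -scalemxAr mxE -/(ip cj (t i) (t i)) Hon // eqxx mulr1.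
have -> : ip cj (t i) (G *m t i) = ip cj (A *m t i) (A *m t i).
  by rewrite /ip !adj_mul !mulmxA.
move=> E2; rewrite -E2 lt_def ip_ge0 andbT; by rewrite -E2 in nz.
Qed.

Lemma cj_lam i : (i < l)%N -> cj (lam i) = lam i.
Proof. by move=> il; apply: cj_real; apply: ltW; apply: lam_gt0. Qed.

Lemma TtT p : (p <= l)%N -> adj (Tm p) *m Tm p = 1%:M.
Proof.
move=> pl; apply/matrixP => i j; rewrite !mxE.
have := Hon (leq_trans (ltn_ord i) pl) (leq_trans (ltn_ord j) pl).
rewrite ipE => <-; apply: eq_bigr => a _; rewrite !mxE //.
Qed.

Definition dg p : 'rV[K]_p := \row_(i < p) lam i.

Lemma GT p : (p <= l)%N -> G *m Tm p = Tm p *m diag_mx (dg p).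
Proof.
move=> pl; apply: colP => j; rewrite colM col_Tm col_diag col_Tm.
have [E _] := Hev (leq_trans (ltn_ord j) pl).
by rewrite E mxE.
Qed.

Lemma adj_dg p : (p <= l)%N -> adj (diag_mx (dg p)) = diag_mx (dg p).
Proof.
move=> pl; apply/matrixP => i j; rewrite !mxE rmorphMn.
case: (eqVneq i j) => [->|ne]; first by rewrite cj_lam // (leq_trans (ltn_ord j) pl).
by rewrite !mulr0n.
Qed.

Lemma VtV p : (p <= l)%N -> adj (A *m Tm p) *m (A *m Tm p) = diag_mx (dg p).
Proof.
move=> pl; rewrite adj_mul -mulmxA [adj A *m _]mulmxA GT // mulmxA TtT // mul1mx.
done.
Qed.

Lemma adjG : adj G = G.
Proof. by rewrite adj_mul adjK. Qed.

Variable r : nat.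
Hypothesis rl : (r <= l)%N.

Definition Pr := Tm r *m adj (Tm r).

Lemma adjPr : adj Pr = Pr.
Proof. by rewrite /Pr adj_mul adjK. Qed.

Lemma PrT : Pr *m Tm r = Tm r.
Proof. by rewrite /Pr -mulmxA TtT // mulmx1. Qed.

Lemma PrP : Pr *m Pr = Pr.
Proof. by rewrite {2}/Pr mulmxA PrT. Qed.

Lemma CT : (1%:M - Pr) *m Tm r = 0.
Proof. by rewrite mulmxBl mul1mx PrT subrr. Qed.

Lemma orthA : adj (A *m (1%:M - Pr)) *m (A *m Tm r) = 0.
Proof.
rewrite adj_mul adj_herm_sub ?adjPr // -mulmxA [adj A *m _]mulmxA GT // mulmxA CT.
by rewrite mul0mx.
Qed.

Definition Ur := sketched_space u t r.

Lemma col_Um i : col i Um = u i.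
Proof. by apply/matrixP => a b; rewrite (ord1 b) !mxE. Qed.

Lemma Ur_mem (c : 'cV_r) : Um *m (Tm r *m c) \in Ur.
Proof.
rewrite (mul_colsum (Tm r)) mulmx_sumr; apply: memv_sumr => i _.
by rewrite -scalemxAr col_Tm; apply: memvZ; apply: memv_line.
Qed.

Lemma Ur_span w : w \in Ur -> exists c : 'cV_r, w = Um *m (Tm r *m c).
Proof.
move=> /memv_sumP [vs Hvs ->].
have [f Hf] : exists f : 'I_r -> K, forall i, vs i = f i *: (Um *m t i).
  apply: (@fin_all_exists _ (fun=> K) (fun i f => vs i = f *: (Um *m t i))) => i; have := Hvs i isT => /vlineP [kk ->]; by exists kk.
exists (\col_i f i); rewrite (mul_colsum (Tm r)) mulmx_sumr; apply: eq_bigr => i _.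
by rewrite Hf -scalemxAr col_Tm !mxE.
Qed.

Lemma snap_mem (c : 'cV_m) : Um *m c \in snapspace u.
Proof.
rewrite mul_colsum; apply: memv_sumr => i _; rewrite col_Um.
by apply: memvZ; apply: memv_line.
Qed.


Local Notation C := (1%:M - Pr).

Lemma colB' p q (X Y : 'M[K]_(p, q)) i : col i (X - Y) = col i X - col i Y.
Proof. by apply/matrixP => a b; rewrite !mxE. Qed.

Lemma upi i : u i - Um *m (Tm r *m col i (adj (Tm r))) = Um *m col i C.
Proof.
have -> : Um *m col i C = Um *m col i 1%:M - Um *m col i Pr by rewrite colB' mulmxBr.
have -> : Um *m col i 1%:M = u i by rewrite -colM mulmx1 col_Um.
by rewrite /Pr colM.
Qed.

Lemma ip_col p q (X : 'M[K]_(p, q)) (y : 'cV_p) i : ip cj (col i X) y = (adj X *m y) i 0.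
Proof. by rewrite /ip !mxE; apply: eq_bigr => j _; rewrite !mxE. Qed.

Lemma adj1' p : adj (1%:M : 'M[K]_p) = 1%:M. Proof. exact: adj1. Qed.

Lemma ip_pyth p (a b : 'cV[K]_p) : ip cj a b = 0 -> ip cj (a + b) (a + b) = ip cj a a + ip cj b b.
Proof. by rewrite !ip_fb; apply: fb_pyth; apply: adj1. Qed.

Lemma sq_le a b : 0 <= a -> 0 <= b -> a <= b -> sq a <= sq b.
Proof.
move=> a0 b0 ab; rewrite -(ler_pXn2r (n:=2)) // ?nnegrE ?sq_ge0 //.
by rewrite !sqE.
Qed.

Lemma sq_le' a b : 0 <= a -> 0 <= b -> sq a <= sq b -> a <= b.
Proof.
move=> a0 b0 ab; rewrite -(sqE a0) -(sqE b0).
by rewrite (ler_pXn2r (n:=2)) // ?nnegrE ?sq_ge0.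
Qed.

Lemma projTh_eq i :
  norm2 cj sq (Th *m (u i - projTh cj sq Th Ur (u i))) ^+ 2
  = ip cj (col i (A *m C)) (col i (A *m C)).
Proof.
set x := u i.
pose pi := Um *m (Tm r *m col i (adj (Tm r))).
have piU : pi \in Ur by apply: Ur_mem.
have xpi : Th *m (x - pi) = col i (A *m C).
  by rewrite /x /pi upi mulmxA colM.
have orth : forall w, w \in Ur -> ip cj (Th *m (x - pi)) (Th *m (pi - w)) = 0.
  move=> w /Ur_span [c ->]; rewrite xpi.
  rewrite /pi -mulmxBr -[Tm r *m col i _ - _]mulmxBr ip_col.
  set d := (col i _ - c).
  have -> : adj (A *m C) *m (Th *m (Um *m (Tm r *m d))) = adj (A *m C) *m (A *m Tm r) *m d.
    by rewrite !mulmxA.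
  by rewrite orthA mul0mx mxE.
have dec : forall w, w \in Ur -> ip cj (Th *m (x - w)) (Th *m (x - w)) =
    ip cj (Th *m (x - pi)) (Th *m (x - pi)) + ip cj (Th *m (pi - w)) (Th *m (pi - w)).
  move=> w wU; rewrite -ip_pyth; last exact: orth.
  by rewrite -mulmxDr addrA subrK.
have spec : projTh cj sq Th Ur x \in Ur /\ forall w, w \in Ur ->
    norm2 cj sq (Th *m (x - projTh cj sq Th Ur x)) <= norm2 cj sq (Th *m (x - w)).
  rewrite /projTh; apply: (epsilon_spec (inhabits (0:'cV_n))
    (fun p0 => p0 \in Ur /\ forall w, w \in Ur ->
       norm2 cj sq (Th *m (x - p0)) <= norm2 cj sq (Th *m (x - w)))).
  exists pi; split => // w wU; apply: sq_le; rewrite ?ip_ge0 // dec //.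
  by rewrite lerDl ip_ge0.
case: spec => pU H; rewrite norm22 -xpi; apply/eqP; rewrite eq_le; apply/andP; split.
  apply: sq_le' (H _ piU); exact: ip_ge0.
by rewrite (dec _ pU) lerDl ip_ge0.
Qed.

Lemma DeltaPOD_eq :
  \sum_i norm2 cj sq (Th *m (u i - projTh cj sq Th Ur (u i))) ^+ 2 = fb 1%:M (A *m C) (A *m C).
Proof.
rewrite fb_col ?adj1 //; apply: eq_bigr => i _; by rewrite projTh_eq mul1mx.
Qed.

Lemma lam_nz i : (i < l)%N -> lam i != 0.
Proof. by move=> il; case: (Hev il). Qed.

Lemma Vfree (c : 'cV_l) : (A *m Tm l) *m c = 0 -> c = 0.
Proof.
move=> H; have : adj (A *m Tm l) *m (A *m Tm l) *m c = 0 by rewrite -mulmxA H mulmx0.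
rewrite VtV // => Hd; apply/matrixP => i j; rewrite (ord1 j).
have := congr1 (fun M : 'cV[K]_l => M i 0) Hd; rewrite mul_diag_mx !mxE => /eqP.
by rewrite mulf_eq0 (negPf (lam_nz (ltn_ord i))) /= => /eqP.
Qed.

Lemma complete : A = A *m (Tm l *m adj (Tm l)).
Proof.
set V := A *m Tm l.
have rV : \rank V^T = l by rewrite mxrank_tr; apply: rank_free; exact: Vfree.
have sub : (V^T <= A^T)%MS by rewrite /V trmx_mul submxMl.
have : (V^T == A^T)%MS by rewrite -(mxrank_leqif_eq sub).2 rV mxrank_tr -Hrank.
case/andP => _ /submxP [D HD].
have AVD : A = V *m D^T by rewrite -[A]trmxK HD trmx_mul trmxK.
apply/eqP; rewrite -subr_eq0 -{1}[A]mulmx1 -mulmxBr; apply/eqP.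
set Z := A *m _.
apply: tr_eq0.
have hT : adj (Tm l *m adj (Tm l)) = Tm l *m adj (Tm l) by rewrite adj_mul adjK.
have ZV : adj Z *m V = 0.
  have -> : adj Z *m V = (1%:M - Tm l *m adj (Tm l)) *m (G *m Tm l).
    by rewrite /Z adj_mul adj_herm_sub // /V !mulmxA.
  rewrite GT // mulmxA mulmxBl mul1mx -(mulmxA (Tm l) (adj (Tm l))) TtT // mulmx1.
  by rewrite subrr mul0mx.
have ZE : Z = V *m (D^T *m (1%:M - Tm l *m adj (Tm l))) by rewrite /Z {1}AVD mulmxA.
by rewrite {2}ZE mulmxA ZV mul0mx linear0.
Qed.

Lemma trGP : \tr (G *m Pr) = \sum_(i < r) lam i.
Proof.
rewrite /Pr mulmxA mxtrace_mulC GT // mulmxA TtT // mul1mx.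
by rewrite mxtrace_diag; apply: eq_bigr => i _; rewrite mxE.
Qed.

Lemma KF_step2 : fb 1%:M (A *m C) (A *m C) = fb 1%:M A A - \sum_(i < r) lam i.
Proof.
rewrite fb_mulC adj_herm_sub ?adjPr // idem_sub ?PrP // mul1mx.
by rewrite fb1 mulmxBr mulmx1 linearB /= trGP.
Qed.

Lemma lamE j : (j < l)%N -> ip cj (A *m t j) (A *m t j) = lam j.
Proof.
move=> jl; have [E _] := Hev jl.
have -> : ip cj (A *m t j) (A *m t j) = ip cj (t j) (G *m t j) by rewrite /ip !adj_mul !mulmxA.
by rewrite E /ip -scalemxAr mxE -/(ip cj (t j) (t j)) Hon // eqxx mulr1.
Qed.

Definition Dinv : 'M[K]_l := diag_mx (\row_(j < l) (lam j)^-1).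

Lemma adj_Dinv : adj Dinv = Dinv.
Proof.
apply/matrixP => i j; rewrite !mxE rmorphMn.
case: (eqVneq i j) => [->|ne]; last by rewrite !mulr0n.
by rewrite cj_real // invr_ge0 ltW // lam_gt0.
Qed.

Lemma DinvD : Dinv *m diag_mx (dg l) = 1%:M.
Proof.
rewrite mulmx_diag; apply/matrixP => i j; rewrite !mxE mulVf //; exact: lam_nz.
Qed.

Lemma KF_step3 (Q : 'M[K]_k) : adj Q = Q -> Q *m Q = Q -> \tr Q <= r%:R -> (0 < r)%N ->
  \tr (adj A *m (Q *m A)) <= \sum_(i < r) lam i.
Proof.
move=> HQ IQ trQ r0.
set V := A *m Tm l.
rewrite (tr_compl Q complete (TtT (leqnn l))) -/V.
pose a j := ip cj (A *m t j) (Q *m (A *m t j)).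
have colV : forall j : 'I_l, col j V = A *m t j by move=> j; rewrite /V colM col_Tm.
have Mjj : forall j : 'I_l, (adj V *m (Q *m V)) j j = a j.
  move=> j.
  transitivity ((col j (adj V *m (Q *m V))) j 0); first by rewrite !mxE.
  by rewrite !colM -ip_col colV col_Tm.
have trE' : \tr (adj V *m (Q *m V)) = \sum_(j < l) a j.
  by rewrite /mxtrace; apply: eq_bigr => j _; rewrite Mjj.
have aE : forall j, a j = fb 1%:M (Q *m (A *m t j)) (Q *m (A *m t j)).
  by move=> j; rewrite fb_left // tr11.
rewrite trE'; apply: (sum_rearr r0 rl lam_gt0 Hord).
- by move=> j _; rewrite aE; exact: (fb_ge0 (@PD1 k)).
- move=> j jl; rewrite aE -(lamE jl) ip_fb; exact: fb_left_le.
set N := V *m Dinv *m adj V.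
have HN : adj N = N by rewrite /N adj_mul adjK adj_mul adj_Dinv mulmxA.
have IN : N *m N = N.
  have -> : N *m N = V *m Dinv *m (adj V *m V) *m Dinv *m adj V by rewrite /N !mulmxA.
  by rewrite /V VtV // -(mulmxA V) DinvD mulmx1.
have E : \sum_(j < l) a j / lam j = \tr (Q *m N).
  have -> : Q *m N = (Q *m V) *m (Dinv *m adj V) by rewrite /N !mulmxA.
  rewrite mxtrace_mulC -mulmxA /mxtrace; apply: eq_bigr => j _.
  by rewrite /Dinv mul_diag_mx mxE Mjj mxE mulrC.
rewrite E; exact: le_trans (tr_QN HQ IQ HN IN) trQ.
Qed.

Lemma KF d (M : 'M[K]_(k, d)) (Z : 'M[K]_(d, m)) : (\rank M <= r)%N -> (0 < r)%N ->
  fb 1%:M (A *m C) (A *m C) <= fb 1%:M (A - M *m Z) (A - M *m Z).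
Proof.
move=> rM r0.
set B := (row_base M^T)^T.
have Bf : forall c : 'cV_(\rank M^T), B *m c = 0 -> c = 0.
  move=> c /(congr1 trmx); rewrite trmx_mul trmxK trmx0 => /eqP.
  rewrite mulmx_free_eq0 ?row_base_free // => /eqP /(congr1 trmx); by rewrite trmxK trmx0.
have [D HD] : exists D, M = B *m D.
  have : (M^T <= row_base M^T)%MS by rewrite eq_row_base submx_refl.
  case/submxP => D' HD'; exists D'^T; by rewrite /B -trmx_mul -HD' trmxK.
have [X [BXB orth trX]] := proj_ex (adj1 k) (@PD1 k) Bf.
set Q := B *m X.
have HQ : adj Q = Q by apply: herm_of_proj; rewrite -[adj B]mulmx1.
have IQ : Q *m Q = Q by rewrite /Q mulmxA BXB.
have QM : Q *m M = M by rewrite HD /Q mulmxA BXB.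
have trQ : \tr Q <= r%:R by rewrite /Q trX // mxrank_tr ler_nat.
rewrite KF_step2; apply: le_trans _ (KF_step1 A Z HQ IQ QM).
by rewrite lerB // KF_step3.
Qed.

Section ErrUr.
Variable (RU : 'M[K]_n).
Hypothesis HR : adj RU = RU.
Hypothesis PD : forall x : 'cV_n, x != 0 -> 0 < ip cj x (RU *m x).

Lemma errUr_le :
  \sum_i normU cj sq RU (u i - projU cj RU Ur (u i)) ^+ 2 <= fb RU (Um *m C) (Um *m C).
Proof.
rewrite fb_col //; apply: ler_sum => i _.
pose pi := Um *m (Tm r *m col i (adj (Tm r))).
have xpi : u i - pi = col i (Um *m C).
  by rewrite /pi upi colM.
rewrite normU2 //; apply: (le_trans (y := ipU cj RU (u i - pi) (u i - pi))).
  by apply: projU_best => //; apply: Ur_mem.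
by rewrite -/pi xpi ipU_fb // /fb tr11.
Qed.

End ErrUr.

Section Main.
Variables (RU : 'M[K]_n) (eps : K).
Hypothesis HR : adj RU = RU.
Hypothesis PD : forall x : 'cV_n, x != 0 -> 0 < ip cj x (RU *m x).
Hypothesis e0 : 0 <= eps.
Hypothesis e1 : eps < 1.

Lemma ipU_ip (x : 'cV_n) : ipU cj RU x x = ip cj x (RU *m x).
Proof. by rewrite ipU_fb // /fb tr11. Qed.

Lemma emb_bounds V x : eps_embedding cj sq RU Th eps V -> x \in V ->
  (1 - eps) * ipU cj RU x x <= ip cj (Th *m x) (Th *m x) /\
  ip cj (Th *m x) (Th *m x) <= (1 + eps) * ipU cj RU x x.
Proof.
move=> H xV; have := H x x xV xV; rewrite -mulrA normUM //.
have re : ipU cj RU x x - ip cj (Th *m x) (Th *m x) \is Num.real.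
  by rewrite rpredB // ger0_real // ?ip_ge0 // ipU_ge0.
move=> Hd; split.
- have := real_ler_distlDr re Hd; rewrite -subr_ge0 => H1; rewrite -subr_ge0.
  by have -> : ip cj (Th *m x) (Th *m x) - (1 - eps) * ipU cj RU x x =
     ip cj (Th *m x) (Th *m x) + eps * ipU cj RU x x - ipU cj RU x x by ring.
- have := real_ler_distlCDr re Hd; rewrite -subr_ge0 => H1; rewrite -subr_ge0.
  by have -> : (1 + eps) * ipU cj RU x x - ip cj (Th *m x) (Th *m x) =
     ipU cj RU x x + eps * ipU cj RU x x - ip cj (Th *m x) (Th *m x) by ring.
Qed.

Lemma fb_lo q (X : 'M[K]_(n, q)) :
  (forall j, (1 - eps) * ipU cj RU (col j X) (col j X) <= ip cj (Th *m col j X) (Th *m col j X)) ->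
  fb RU X X <= (1 - eps)^-1 * fb 1%:M (Th *m X) (Th *m X).
Proof.
move=> H; rewrite !fb_col ?adj1 // mulr_sumr; apply: ler_sum => j _.
rewrite mul1mx colM -ipU_ip ler_pdivlMl ?subr_gt0 //; exact: H.
Qed.

Lemma fb_hi q (X : 'M[K]_(n, q)) :
  (forall j, ip cj (Th *m col j X) (Th *m col j X) <= (1 + eps) * ipU cj RU (col j X) (col j X)) ->
  fb 1%:M (Th *m X) (Th *m X) <= (1 + eps) * fb RU X X.
Proof.
move=> H; rewrite !fb_col ?adj1 // mulr_sumr; apply: ler_sum => j _.
rewrite mul1mx colM -ipU_ip; exact: H.
Qed.

Lemma fb_sumU q (v : 'I_q -> 'cV[K]_n) :
  fb RU (\matrix_(a, i) v i a 0) (\matrix_(a, i) v i a 0) = \sum_i normU cj sq RU (v i) ^+ 2.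
Proof.
rewrite fb_col //; apply: eq_bigr => i _; rewrite normU2 // ipU_ip.
have -> : col i (\matrix_(a, i) v i a 0) = v i by apply/matrixP => a b; rewrite (ord1 b) !mxE.
done.
Qed.

Lemma DeltaPOD_E : DeltaPOD cj sq Th u Ur = m%:R^-1 * fb 1%:M (A *m C) (A *m C).
Proof. by rewrite /DeltaPOD DeltaPOD_eq. Qed.

Lemma errUr_ii : eps_embedding cj sq RU Th eps (snapspace u) ->
  m%:R^-1 * proj_err cj sq RU u Ur <= (1 - eps)^-1 * DeltaPOD cj sq Th u Ur.
Proof.
move=> Hemb; rewrite DeltaPOD_E mulrCA; apply: ler_wpM2l; first by rewrite invr_ge0.
rewrite /proj_err; apply: le_trans (errUr_le HR PD) _.
rewrite -(mulmxA Th (snapmx u)); apply: fb_lo => j.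
rewrite colM; exact: (emb_bounds Hemb (snap_mem _)).1.
Qed.

Lemma fb_par p q (R : 'M[K]_p) (X Y : 'M[K]_(p, q)) :
  fb R (X - Y) (X - Y) + fb R (X + Y) (X + Y) = 2 * fb R X X + 2 * fb R Y Y.
Proof. rewrite !fbBl !fbDl !fbBr !fbDr; ring. Qed.

Lemma errUr_i (Y : {vspace 'cV[K]_n}) : eps_embedding cj sq RU Th eps Y ->
  (forall i, eps_embedding cj sq RU Th eps <[u i - projU cj RU Y (u i)]>%VS) ->
  m%:R^-1 * proj_err cj sq RU u Ur <= 2 / (1 - eps) * DeltaPOD cj sq Th u Ur
     + (2 * (1 + eps) / (1 - eps) + 1) * (m%:R^-1 * proj_err cj sq RU u Y).
Proof.
move=> HY Hl.
pose E := \matrix_(a, i) (u i - projU cj RU Y (u i)) a 0.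
pose Yb := \matrix_(a, i) (projU cj RU Y (u i)) a 0.
have colE : forall j, col j E = u j - projU cj RU Y (u j).
  by move=> j; apply/matrixP => a b; rewrite (ord1 b) !mxE.
have colYb : forall j, col j Yb = projU cj RU Y (u j).
  by move=> j; apply/matrixP => a b; rewrite (ord1 b) !mxE.
have YbY : forall j, col j Yb \in Y by move=> j; rewrite colYb projU_mem.
have UmE : Um = Yb + E by apply/matrixP => a i; rewrite !mxE addrC subrK.
have orthYE : adj Yb *m (RU *m E) = 0.
  apply/matrixP => i j; rewrite [RHS]mxE.
  transitivity ((col j (adj Yb *m (RU *m E))) i 0); first by rewrite !mxE.
  rewrite !colM -ip_col colE.
  by move: (projU_orth HR PD (u j) (YbY i)); rewrite /fb tr11.
have sE : fb RU E E = proj_err cj sq RU u Y by rewrite /proj_err -fb_sumU.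
have decomp : fb RU (Um *m C) (Um *m C) = fb RU (Yb *m C) (Yb *m C) + fb RU (E *m C) (E *m C).
  rewrite UmE mulmxDl fb_pyth //.
  by rewrite fb_mulC orthYE mul0mx linear0.
have hC : adj C = C by rewrite adj_herm_sub ?adjPr.
have iC : C *m C = C by rewrite idem_sub ?PrP.
have EC : fb RU (E *m C) (E *m C) <= fb RU E E by apply: fb_contract.
have ThE : fb 1%:M (Th *m E) (Th *m E) <= (1 + eps) * fb RU E E.
  apply: fb_hi => j; rewrite colE; exact: (emb_bounds (Hl j) (memv_line _)).2.
have ThEC : fb 1%:M (Th *m E *m C) (Th *m E *m C) <= (1 + eps) * fb RU E E.
  apply: le_trans ThE; apply: fb_contract => //; [exact: adj1 | exact: PD1].
have YbC : fb RU (Yb *m C) (Yb *m C) <= (1 - eps)^-1 * fb 1%:M (Th *m (Yb *m C)) (Th *m (Yb *m C)).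
  apply: fb_lo => j; exact: (emb_bounds HY (cols_mul _ YbY j)).1.
have ThYb : Th *m (Yb *m C) = A *m C - Th *m E *m C.
  by rewrite -!mulmxA -mulmxBr -mulmxBl UmE addrK.
have par : fb 1%:M (Th *m (Yb *m C)) (Th *m (Yb *m C)) <=
    2 * fb 1%:M (A *m C) (A *m C) + 2 * fb 1%:M (Th *m E *m C) (Th *m E *m C).
  rewrite ThYb -fb_par lerDl; exact: (fb_ge0 (@PD1 k)).
have main : proj_err cj sq RU u Ur <=
    (1 - eps)^-1 * (2 * fb 1%:M (A *m C) (A *m C) + 2 * ((1 + eps) * proj_err cj sq RU u Y))
    + proj_err cj sq RU u Y.
  apply: le_trans (errUr_le HR PD) _; rewrite decomp -sE.
  apply: (lerD _ EC).
  apply: le_trans YbC _; apply: ler_wpM2l; first by rewrite invr_ge0 subr_ge0 ltW.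
  apply: le_trans par _; apply: lerD => //; apply: ler_wpM2l => //.
have m0 : 0 <= m%:R^-1 :> K by rewrite invr_ge0.
apply: le_trans (ler_wpM2l m0 main) _; rewrite DeltaPOD_E.
rewrite le_eqVlt; apply/orP; left; apply/eqP; ring.
Qed.

Hypothesis r0 : (0 < r)%N.

Lemma POD_le (Ustar : {vspace 'cV[K]_n}) : \dim Ustar = r ->
  (forall i, ip cj (Th *m (u i - projU cj RU Ustar (u i))) (Th *m (u i - projU cj RU Ustar (u i)))
     <= (1 + eps) * ipU cj RU (u i - projU cj RU Ustar (u i)) (u i - projU cj RU Ustar (u i))) ->
  DeltaPOD cj sq Th u Ur <= (1 + eps) * (m%:R^-1 * proj_err cj sq RU u Ustar).
Proof.
move=> dimU H; rewrite DeltaPOD_E mulrCA; apply: ler_wpM2l; first by rewrite invr_ge0.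
pose Wm := \matrix_(a, i) (projU cj RU Ustar (u i)) a 0.
have [Z HZ] : exists Z, Wm = bmx Ustar *m Z.
  apply: bmx_cols => j; have -> : col j Wm = projU cj RU Ustar (u j).
    by apply/matrixP => a b; rewrite (ord1 b) !mxE.
  exact: projU_mem.
have rk : (\rank (Th *m bmx Ustar) <= r)%N by rewrite -dimU rank_leq_col.
apply: le_trans (KF Z rk r0) _.
have E : A - Th *m bmx Ustar *m Z = Th *m (\matrix_(a, i) (u i - projU cj RU Ustar (u i)) a 0).
  rewrite -mulmxA -HZ -mulmxBr; congr (_ *m _); apply/matrixP => a i; rewrite !mxE.
  done.
rewrite E /proj_err -fb_sumU; apply: fb_hi => j.
have -> : col j (\matrix_(a, i) (u i - projU cj RU Ustar (u i)) a 0) = u j - projU cj RU Ustar (u j).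
  by apply/matrixP => a b; rewrite (ord1 b) !mxE.
exact: H.
Qed.

End Main.

End Sketch.


Theorem main_gen : thm54_statement cj sq.
Proof.
move=> n m k RU u Th eps r Ustar l lam t HR PD e0 e1 r0 subU dimU optU Heig rl.
move=> Ur0 errUr0 errStar0; rewrite /errUr0 /errStar0 /Ur0 => {Ur0 errUr0 errStar0}.
have PD' : forall x : 'cV_n, x != 0 -> 0 < ip cj x (RU *m x) by exact: PD.
have mUstar : forall i, u i - projU cj RU Ustar (u i) \in <[u i - projU cj RU Ustar (u i)]>%VS.
  by move=> i; apply: memv_line.
split.
- move=> Y subY dimY HY Hres Hstar; cbv zeta; split.
  + exact: (errUr_i Heig rl HR PD' e1 HY Hres).
  + rewrite lerD2r.
    have H := POD_le Heig rl HR PD' r0 dimU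
      (fun i => (emb_bounds HR PD' (Hstar i) (mUstar i)).2).
    have -> : 2 * (1 + eps) / (1 - eps) * (m%:R^-1 * proj_err cj sq RU u Ustar)
       = 2 / (1 - eps) * ((1 + eps) * (m%:R^-1 * proj_err cj sq RU u Ustar)) by ring.
    apply: ler_wpM2l H; rewrite divr_ge0 // subr_ge0 ltW //.
- move=> Hsnap _; split.
  + exact: (errUr_ii Heig rl HR PD' e1 Hsnap).
  + have mem : forall i, u i - projU cj RU Ustar (u i) \in snapspace u.
      move=> i; rewrite memvB //.
        have -> : u i = snapmx u *m col i 1%:M by rewrite -colM mulmx1 col_Um.
        exact: snap_mem.
      exact: (subvP subU _ (projU_mem HR PD' _ _)).
    have H := POD_le Heig rl HR PD' r0 dimU
      (fun i => (emb_bounds HR PD' Hsnap (mem i)).2).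
    have -> : (1 + eps) / (1 - eps) * (m%:R^-1 * proj_err cj sq RU u Ustar)
       = (1 - eps)^-1 * ((1 + eps) * (m%:R^-1 * proj_err cj sq RU u Ustar)) by ring.
    apply: ler_wpM2l H; rewrite invr_ge0 subr_ge0 ltW //.
Qed.

End Gen.


Theorem theorem5p4 :
  (forall R : rcfType, thm54_statement (fun x : R => x) Num.sqrt)
  /\ (forall C : numClosedFieldType, thm54_statement (@Num.conj C) sqrtC).
Proof.
split.
- move=> R.
  apply: (@main_gen R idfun Num.sqrt).
  + by [].
  + by [].
  + by move=> x; rewrite /= -expr2 sqr_ge0.
  + by move=> x /eqP; rewrite /= mulf_eq0 orbb => /eqP.
  + by move=> x _; rewrite sqrtr_ge0.
  + by move=> x x0; rewrite sqr_sqrtr.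
- move=> C.
  apply: (@main_gen C Num.conj sqrtC).
  + exact: conjCK.
  + by move=> x x0; apply: geC0_conj.
  + by move=> x; rewrite mulrC; apply: mul_conjC_ge0.
  + move=> x; rewrite mulrC => H; apply/eqP; rewrite -(mul_conjC_eq0 x); exact/eqP.
  + by move=> x x0; rewrite sqrtC_ge0.
  + by move=> x _; apply: sqrtCK.
Qed.
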